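(* Let $G$ be a graph on $n$ vertices and let $\mathcal{C}$ be a clique geometry in $G$ such that every vertex belongs to at least $r\ge 2$ and at most $R$ members of $\mathcal{C}$, and every member of $\mathcal{C}$ has order at least $\ell$. Then \[ \ell \le \frac{R}{\sqrt{r(r-1)}}\sqrt{n}. \]
   Context: The order of a clique is its number of vertices. A collection $\mathcal{C}$ of cliques of a graph is a clique geometry if (i) every clique in $\mathcal{C}$ is a maximal clique and (ii) every pair of adjacent vertices belongs to exactly one member of $\mathcal{C}$. *)

(* Defs.v *)
From mathcomp Require Import all_boot all_order all_algebra.
Set Implicit Arguments. Unset Strict Implicit. Unset Printing Implicit Defensive.

Definition simple_graph (T : finType) (e : rel T) : Prop :=
  irreflexive e /\ symmetric e.

Definition is_clique (T : finType) (e : rel T) (K : {set T}) : Prop :=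
  forall x y, x \in K -> y \in K -> x != y -> e x y.

Definition is_maximal_clique (T : finType) (e : rel T) (K : {set T}) : Prop :=
  is_clique e K /\ forall K' : {set T}, is_clique e K' -> K \subset K' -> K' = K.

Definition clique_geometry (T : finType) (e : rel T) (C : {set {set T}}) : Prop :=
  (forall K, K \in C -> is_maximal_clique e K) /\
  (forall x y, e x y -> exists! K, K \in C /\ x \in K /\ y \in K).

Definition nb_cliques_at (T : finType) (C : {set {set T}}) (x : T) : nat :=
  #|[set K in C | x \in K]|.

(* Main.v *)
Require Import Defs.
From mathcomp Require Import all_boot all_order all_algebra.
Import Order.TTheory GRing.Theory Num.Theory.
Local Open Scope ring_scope.

Section Aux.
Local Open Scope nat_scope.
Local Set Implicit Arguments. Local Unset Strict Implicit.
Lemma share_le1 (T : finType) (e : rel T) (C : {set {set T}}) K1 K2 :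
  clique_geometry e C -> K1 \in C -> K2 \in C -> K1 != K2 ->
  (\sum_x (((x \in K1) && (x \in K2)) : nat) <= 1)%N.
Proof.
move=> [Hmax Huniq] H1 H2 Hne.
rewrite -big_mkcond /= sum1_card.
apply/card_le1_eqP => x y /andP[x1 x2] /andP[y1 y2].
apply/eqP; apply/negPn/negP => Hxy.
have exy : e x y.
  by case: (Hmax _ H1) => Hc _; apply: Hc => //; rewrite eq_sym.
case: (Huniq _ _ exy) => K [_ HK].
have E1 := HK K1 (conj H1 (conj x1 y1)).
have E2 := HK K2 (conj H2 (conj x2 y2)).
by move/eqP: Hne; apply; rewrite -E1 -E2.
Qed.

Lemma comb (T : finType) (e : rel T) (C : {set {set T}}) (r R l : nat) :
  clique_geometry e C ->
  (0 < #|T|)%N ->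
  (forall x : T, r <= nb_cliques_at C x <= R)%N ->
  (forall K, K \in C -> l <= #|K|)%N ->
  (r * (r - 1) * l ^ 2 <= #|T| * R ^ 2)%N.
Proof.
move=> Hg Hn Hnb Hl.
pose a x K : nat := ((K \in C) && (x \in K)).
have nbE x : nb_cliques_at C x = \sum_K a x K.
  rewrite /nb_cliques_at -sum1_card big_mkcond /=; apply: eq_bigr => K _.
  by rewrite inE.
have S1 : (#|C| * l <= #|T| * R)%N.
  have -> : (#|T| * R = \sum_(x : T) R)%N by rewrite sum_nat_const mulnC.
  apply: (@leq_trans (\sum_x nb_cliques_at C x)); last first.
    by apply: leq_sum => x _; case/andP: (Hnb x).
  under eq_bigr do rewrite nbE.
  rewrite exchange_big /=.
  rewrite -sum1_card big_distrl /= (big_mkcond (fun K => K \in C)) /=.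
  apply: leq_sum => K _; rewrite /a; case: ifP => KC /=; last by [].
  rewrite mul1n; apply: (leq_trans (Hl K KC)).
  by rewrite -sum1_card big_mkcond /=.
pose Q := (\sum_x \sum_K1 \sum_K2 (K1 != K2) * a x K1 * a x K2)%N.
have Qlo : (#|T| * (r * (r - 1)) <= Q)%N.
  have -> : (#|T| * (r * (r - 1)) = \sum_(x : T) (r * (r-1)))%N.
    by rewrite sum_nat_const mulnC.
  apply: leq_sum => x _.
  have -> : (\sum_K1 \sum_K2 (K1 != K2) * a x K1 * a x K2 =
             \sum_K1 a x K1 * (nb_cliques_at C x - 1))%N.
    apply: eq_bigr => K1 _.
    have -> : (\sum_K2 (K1 != K2) * a x K1 * a x K2 =
               a x K1 * \sum_(K2 | K2 != K1) a x K2)%N.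
      rewrite big_distrr /= (bigD1 K1) //= eqxx mul0n add0n.
      by apply: eq_bigr => K2 H; rewrite eq_sym H mul1n.
    rewrite nbE [in RHS](bigD1 K1) //=.
    rewrite /a; case: (_ && _) => /=; last by rewrite !mul0n.
    by rewrite !mul1n addKn.
  have -> : (\sum_K1 a x K1 * (nb_cliques_at C x - 1) = (\sum_K1 a x K1) * (nb_cliques_at C x - 1))%N by rewrite big_distrl.
  rewrite -nbE.
  case/andP: (Hnb x) => H1 _.
  by apply: leq_mul => //; apply: leq_sub2r.
have Qhi : (Q <= #|C| ^ 2)%N.
  rewrite /Q exchange_big /=.
  apply: (@leq_trans (\sum_K1 \sum_K2 ((K1 \in C) && (K2 \in C) : nat))).
    apply: leq_sum => K1 _; rewrite exchange_big /=; apply: leq_sum => K2 _.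
    case: (boolP (K1 \in C)) => c1; last first.
      by rewrite big1 // => x _; rewrite /a (negbTE c1) /= muln0 mul0n.
    case: (boolP (K2 \in C)) => c2; last first.
      by rewrite big1 // => x _; rewrite /a (negbTE c2) /= muln0.
    case: (boolP (K1 != K2)) => ne; last by rewrite big1 // => x _; rewrite mul0n.
    have := share_le1 Hg c1 c2 ne; apply: leq_trans.
    by apply: eq_leq; apply: eq_bigr => x _; rewrite /a c1 c2 /= mul1n; case: (x \in K1); case: (x \in K2).
  rewrite expnS expn1 -sum1_card big_distrl /= (big_mkcond (fun K => K \in C)) /=.
  apply: eq_leq; apply: eq_bigr => K1 _; case: ifP => c1 /=; last by rewrite big1.
  by rewrite mul1n [RHS]big_mkcond; apply: eq_bigr => K _; case: ifP.
have h1 : (#|T| * (r * (r - 1)) * l ^ 2 <= #|C| ^ 2 * l ^ 2)%N.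
  by apply: leq_mul => //; apply: leq_trans Qlo Qhi.
have h2 : (#|C| ^ 2 * l ^ 2 <= (#|T| * R) ^ 2)%N.
  by rewrite -expnMn -!mulnn leq_mul.
have h3 : (#|T| * (r * (r - 1) * l ^ 2) <= #|T| * (#|T| * R ^ 2))%N.
  rewrite mulnA; apply: leq_trans h1 _; apply: leq_trans h2 _.
  by rewrite expnMn -mulnn mulnA.
by rewrite leq_pmul2l in h3.
Qed.
End Aux.

Theorem lemma10 (F : rcfType) (T : finType) (e : rel T) (C : {set {set T}})
    (r R l : nat) :
  simple_graph e ->
  (0 < #|T|)%N ->
  clique_geometry e C ->
  (2 <= r)%N ->
  (forall x : T, r <= nb_cliques_at C x <= R)%N ->
  (forall K, K \in C -> l <= #|K|)%N ->
  (l%:R : F) <= R%:R / Num.sqrt ((r * (r - 1))%:R) * Num.sqrt (#|T|%:R).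
Proof.
move=> _ Hn Hg Hr Hnb Hl.
have N := comb Hg Hn Hnb Hl.
have rr0 : (0 : F) < (r * (r - 1))%:R.
  by rewrite ltr0n muln_gt0; apply/andP; split; rewrite ?subn_gt0; apply: leq_trans Hr.
have s0 : (0 : F) < Num.sqrt ((r * (r - 1))%:R) by rewrite sqrtr_gt0.
rewrite mulrAC ler_pdivlMr //.
rewrite -(ler_pXn2r (n:=2)) // ?inE ?mulr_ge0 ?sqrtr_ge0 ?ler0n //.
rewrite !exprMn !sqr_sqrtr ?ler0n // -!natrX -!natrM ler_nat.
- by rewrite mulnC [X in (_ <= X)%N]mulnC.
- by rewrite qualifE /= mulr_ge0 ?sqrtr_ge0 ?ler0n.
- by rewrite qualifE /= mulr_ge0 ?sqrtr_ge0 ?ler0n.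
Qed.
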